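(* Consider the scenario of three two-outcome measurements $1,2,3$, each pair of which is compatible, and Specker's behaviour in which, for each pair $(i,j)\in\{(1,2),(2,3),(3,1)\}$, $P(00\mid ij)=P(11\mid ij)=0$ and $P(01\mid ij)=P(10\mid ij)=\tfrac12$. Then the product of two statistically independent copies of this behaviour violates the exclusivity principle: there is a set of pairwise mutually exclusive events of the two-copy experiment whose probabilities sum to more than $1$. The same holds for Wright's behaviour on five two-outcome measurements $1,\dots,5$ with $i$ and $i+1 \pmod 5$ compatible, defined by $P(00\mid i,i+1)=P(11\mid i,i+1)=0$, $P(01\mid i,i+1)=P(10\mid i,i+1)=\tfrac12$.
   Context: $P(a b\mid i j)$ denotes the probability of outcomes $a$ for measurement $i$ and $b$ for measurement $j$. Two events are mutually exclusive if they assign different outcomes to a common measurement. In the joint experiment of two statistically independent copies, events are pairs $(e,e')$ with probability $P(e)P(e')$, and $(e,e')$, $(f,f')$ are mutually exclusive iff $e,f$ are exclusive or $e',f'$ are exclusive. The exclusivity principle: the probabilities of any set of pairwise mutually exclusive events sum to at most $1$. *)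

(* Defs.v *)
From HB Require Import structures.
From mathcomp Require Import all_boot all_order all_algebra.
Set Implicit Arguments. Unset Strict Implicit. Unset Printing Implicit Defensive.
Import Order.TTheory GRing.Theory Num.Theory.

(* A scenario: n two-outcome measurements 'I_n, and k contexts of pairwise
   compatible measurements, context t being the ordered pair ctx t = (i, j).
   An event (t, (a, b)) is "outcome a for measurement i and outcome b for j"
   with (i, j) = ctx t, i.e. the event (ab|ij). *)
Definition event (k : nat) : finType := ('I_k * (bool * bool))%type.

Definition assigns (n k : nat) (ctx : 'I_k -> 'I_n * 'I_n)
  (e : event k) (m : 'I_n) (v : bool) : bool :=
  (((ctx e.1).1 == m) && (e.2.1 == v)) || (((ctx e.1).2 == m) && (e.2.2 == v)).

Definition exclusive (n k : nat) (ctx : 'I_k -> 'I_n * 'I_n) (e f : event k) : bool :=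
  [exists m : 'I_n, exists v : bool, assigns ctx e m v && assigns ctx f m (~~ v)].

Definition exclusive2 (n k : nat) (ctx : 'I_k -> 'I_n * 'I_n)
  (E F : event k * event k) : bool :=
  exclusive ctx E.1 F.1 || exclusive ctx E.2 F.2.

Definition prob2 (k : nat) (P : event k -> rat) (E : event k * event k) : rat :=
  (P E.1 * P E.2)%R.

Definition violates_EP_two_copies (n k : nat) (ctx : 'I_k -> 'I_n * 'I_n)
  (P : event k -> rat) : Prop :=
  exists S : {set event k * event k},
    {in S &, forall E F, E != F -> exclusive2 ctx E F} /\
    (1 < \sum_(E in S) prob2 P E)%R.

(* Cyclic scenario on N measurements: contexts (i, i+1 mod N), i < N.
   (ordS t has value t.+1 %% N.)  For N = 3: (1,2),(2,3),(3,1) (0-indexed). For N = 5: Wright's pentagon. *)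
Definition cyc_ctx (N : nat) (t : 'I_N) : 'I_N * 'I_N :=
  (t, ordS t).

Definition anticorr (k : nat) (e : event k) : rat :=
  if e.2.1 != e.2.2 then (1 / 2)%R else 0%R.

(* Main.v *)
Require Import Defs.
From mathcomp Require Import all_boot all_order all_algebra.
From mathcomp Require Import lra.
Import Order.TTheory GRing.Theory Num.Theory.

Lemma from_list n k (ctx : 'I_k -> 'I_n * 'I_n) (P : event k -> rat)
  (s : seq (event k * event k)) : uniq s ->
  (forall E F, E \in s -> F \in s -> (E == F) || exclusive2 ctx E F) ->
  (1 < \sum_(E <- s) prob2 P E)%R -> violates_EP_two_copies ctx P.
Proof.
move=> us ha hs; exists [set x in s]; split.
  move=> E F; rewrite !inE => hE hF hne.
  by have := ha E F hE hF; rewrite (negbTE hne).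
rewrite (big_uniq _ us) in hs.
by rewrite (eq_bigl (fun x => x \in s)) // => x; rewrite inE.
Qed.

Lemma exI n k (ctx : 'I_k -> 'I_n * 'I_n) e f (m : 'I_n) (v : bool) :
  assigns ctx e m v && assigns ctx f m (~~ v) -> exclusive ctx e f.
Proof. by move=> h; apply/existsP; exists m; apply/existsP; exists v. Qed.

Notation o3 i := (@Ordinal 3 i isT).
Notation o5 i := (@Ordinal 5 i isT).

Ltac inn3 := first [ (apply: (@exI _ _ _ _ _ (o3 0) false); by []) | (apply: (@exI _ _ _ _ _ (o3 0) true); by [])
        | (apply: (@exI _ _ _ _ _ (o3 1) false); by []) | (apply: (@exI _ _ _ _ _ (o3 1) true); by [])
        | (apply: (@exI _ _ _ _ _ (o3 2) false); by []) | (apply: (@exI _ _ _ _ _ (o3 2) true); by [])].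
Ltac ex3 := rewrite /exclusive2 /=; apply/orP; first [left; inn3 | right; inn3].
Ltac inn5 := first [ (apply: (@exI _ _ _ _ _ (o5 0) false); by []) | (apply: (@exI _ _ _ _ _ (o5 0) true); by [])
        | (apply: (@exI _ _ _ _ _ (o5 1) false); by []) | (apply: (@exI _ _ _ _ _ (o5 1) true); by [])
        | (apply: (@exI _ _ _ _ _ (o5 2) false); by []) | (apply: (@exI _ _ _ _ _ (o5 2) true); by [])
        | (apply: (@exI _ _ _ _ _ (o5 3) false); by []) | (apply: (@exI _ _ _ _ _ (o5 3) true); by [])
        | (apply: (@exI _ _ _ _ _ (o5 4) false); by []) | (apply: (@exI _ _ _ _ _ (o5 4) true); by [])].
Ltac ex5 := rewrite /exclusive2 /=; apply/orP; first [left; inn5 | right; inn5].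

Theorem mainTheorem7 :
  violates_EP_two_copies (@cyc_ctx 3) (@anticorr 3) /\
  violates_EP_two_copies (@cyc_ctx 5) (@anticorr 5).
Proof.
split.
  apply: (@from_list _ _ _ _
    [:: ((o3 0, (false, true)), (o3 0, (false, true)));
        ((o3 0, (false, true)), (o3 0, (true, false)));
        ((o3 0, (true, false)), (o3 0, (false, true)));
        ((o3 0, (true, false)), (o3 1, (false, true)));
        ((o3 0, (true, false)), (o3 2, (false, true)))]).
  - by [].
  - move=> E F; rewrite !inE => hE hF; move: hE; do ![case/orP=> [/eqP->|] | move/eqP->]; move: hF; do ![case/orP=> [/eqP->|] | move/eqP->];
    first [by apply/orP; left | ex3].
  - rewrite !big_cons big_nil /prob2 /anticorr /=; lra.
apply: (@from_list _ _ _ _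
    [:: ((o5 0, (false, true)), (o5 0, (false, true)));
        ((o5 1, (false, true)), (o5 2, (false, true)));
        ((o5 2, (false, true)), (o5 4, (false, true)));
        ((o5 3, (false, true)), (o5 1, (false, true)));
        ((o5 4, (false, true)), (o5 3, (false, true)))]).
- by [].
- move=> E F; rewrite !inE => hE hF; move: hE; do ![case/orP=> [/eqP->|] | move/eqP->]; move: hF; do ![case/orP=> [/eqP->|] | move/eqP->];
  first [by apply/orP; left | ex5].
- rewrite !big_cons big_nil /prob2 /anticorr /=; lra.
Qed.
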